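(* Let $\mathcal H=\mathbb C^2$ with reference basis the eigenbasis $\{|0\rangle,|1\rangle\}$ of $\sigma_z$, and let the Hamiltonian be $H(t)=\varepsilon_0\mathbb I_2+\tfrac{\omega(t)}{2}\sigma_z$ (diagonal in that basis). Let $\Phi$ be a qubit CPTP map that is phase covariant with respect to $\sigma_z$, i.e. $e^{-i\phi\sigma_z}\Phi[\rho]e^{i\phi\sigma_z}=\Phi[e^{-i\phi\sigma_z}\rho e^{i\phi\sigma_z}]$ for all $\phi\in\mathbb R$ and all $\rho$. Then for every initial qubit state $\rho_i$ the coherence fluctuation distance vanishes: $\mathfrak D_c(\rho_i)=0$.
   Context: EPM distribution: for a state $\rho$, $p_{\rm coh}^{l,k}(\rho)=\mathrm{Tr}(\rho\Pi^i_l)\,\mathrm{Tr}(\Phi[\rho]\Pi^f_k)$, where $\Pi^i_l$ and $\Pi^f_k$ are the projectors onto the energy eigenbasis (here $|0\rangle\langle0|,|1\rangle\langle1|$) at the initial and final times. Coherence fluctuation distance: $\mathfrak D_c(\rho_i)=\min_{\rho^{\mathcal I}\in\mathscr I}D_{KL}\big(p_{\rm coh}(\rho_i)\,\|\,p_{\rm coh}(\rho^{\mathcal I})\big)$, where $\mathscr I$ is the set of states diagonal in the eigenbasis of the initial Hamiltonian and $D_{KL}(p\|q)=\sum_x p_x\ln(p_x/q_x)$. *)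

(* Defs.v *)
From HB Require Import structures.
From mathcomp Require Import all_boot all_order all_algebra.
From mathcomp Require Import all_classical all_reals.
From mathcomp Require Import ereal exp trigo.
From mathcomp.real_closed Require Import complex.

Set Implicit Arguments.
Unset Strict Implicit.
Unset Printing Implicit Defensive.

Import Order.TTheory GRing.Theory Num.Theory.
Local Open Scope ring_scope.

Section Qubit.
Variable R : realType.
Local Notation C := (R[i]).

(* positive semidefiniteness of an operator on C^I (I finite) :
   <v, A v> >= 0 for all vectors v (in C, "0 <= z" means z real and >= 0) *)
Definition psd (I : finType) (A : I -> I -> C) : Prop :=
  forall v : I -> C, 0 <= \sum_(a : I) \sum_(b : I) conjc (v a) * A a b * v b.

Definition is_state (rho : 'M[C]_2) : Prop :=
  psd (fun a b => rho a b) /\ \tr rho = 1.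

(* (id_n (x) Phi)(X) for an operator X on C^n (x) C^2, entries indexed by
   pairs (system index, qubit index) *)
Definition ampliate (n : nat) (Phi : 'M[C]_2 -> 'M[C]_2)
  (X : 'I_n * 'I_2 -> 'I_n * 'I_2 -> C) : 'I_n * 'I_2 -> 'I_n * 'I_2 -> C :=
  fun p q => Phi (\matrix_(i, j) X (p.1, i) (q.1, j)) p.2 q.2.

Definition completely_positive (Phi : 'M[C]_2 -> 'M[C]_2) : Prop :=
  forall (n : nat) (X : 'I_n * 'I_2 -> 'I_n * 'I_2 -> C),
    psd X -> psd (ampliate Phi X).

Definition trace_preserving (Phi : 'M[C]_2 -> 'M[C]_2) : Prop :=
  forall rho : 'M[C]_2, \tr (Phi rho) = \tr rho.

Definition expi (x : R) : C := Complex (cos x) (sin x).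

(* e^{-i phi sigma_z} = diag(e^{-i phi}, e^{i phi}) *)
Definition Uz (phi : R) : 'M[C]_2 :=
  \matrix_(a, b) (if a == b then (if a == ord0 then expi (- phi) else expi phi)
                  else 0).

Definition phase_covariant (Phi : 'M[C]_2 -> 'M[C]_2) : Prop :=
  forall (phi : R) (rho : 'M[C]_2), is_state rho ->
    Uz phi *m Phi rho *m Uz (- phi) = Phi (Uz phi *m rho *m Uz (- phi)).

Definition proj (l : 'I_2) : 'M[C]_2 := delta_mx l l.

(* EPM distribution p_coh^{l,k}(rho) = Tr(rho Pi_l) Tr(Phi[rho] Pi_k)
   (the traces are real for states; we take real parts) *)
Definition pcoh (Phi : 'M[C]_2 -> 'M[C]_2) (rho : 'M[C]_2) (lk : 'I_2 * 'I_2) : R :=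
  complex.Re (\tr (rho *m proj lk.1)) * complex.Re (\tr (Phi rho *m proj lk.2)).

Definition DKL (X : finType) (p q : X -> R) : \bar R :=
  (\sum_(x : X) (if p x == 0%R then 0%E
                 else if q x == 0%R then +oo%E
                 else (p x * ln (p x / q x))%:E))%E.

(* states diagonal in the eigenbasis of the initial Hamiltonian *)
Definition incoherent (rho : 'M[C]_2) : Prop :=
  is_state rho /\ rho ord0 (lift ord0 ord0) = 0 /\ rho (lift ord0 ord0) ord0 = 0.

(* coherence fluctuation distance (min realized as infimum in \bar R) *)
Definition Dc (Phi : 'M[C]_2 -> 'M[C]_2) (rhoi : 'M[C]_2) : \bar R :=
  ereal_inf [set DKL (pcoh Phi rhoi) (pcoh Phi rhoI) | rhoI in incoherent].

End Qubit.

(* Main.v *)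
Require Import Defs.
From HB Require Import structures.
From mathcomp Require Import all_boot all_order all_algebra.
From mathcomp Require Import all_classical all_reals.
From mathcomp Require Import ereal exp trigo.
From mathcomp.real_closed Require Import complex.

Import Order.TTheory GRing.Theory Num.Theory.
Local Open Scope ring_scope.


Lemma DKL_self (R : realType) (X : finType) (p : X -> R) : DKL p p = 0%E.
Proof.
rewrite /DKL big1 // => x _.
case: ifP => // /negbT hp.
by rewrite (negbTE hp) divff // ln1 mulr0.
Qed.

Lemma ln_ge (R : realType) (x : R) : 0 < x -> 1 - x^-1 <= ln x.
Proof.
move=> x0.
have h : ln (x^-1) <= x^-1 - 1.
  have := @le_ln1Dx R (x^-1 - 1).
  rewrite addrCA subrr addr0; apply.
  by rewrite ltrBrDl subrr invr_gt0.
rewrite lnV ?posrE // in h.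
by move: h; rewrite lerNl opprB.
Qed.

Lemma DKL_ge0 (R : realType) (X : finType) (p q : X -> R) :
  (forall x, 0 <= p x) -> (forall x, 0 <= q x) ->
  \sum_x p x = 1 -> \sum_x q x = 1 -> (0 <= DKL p q)%E.
Proof.
move=> p0 q0 sp sq.
have -> : 0%E = (\sum_x (p x - q x)%:E)%E.
  by rewrite sumEFin big_split /= sumrN sp sq subrr.
rewrite /DKL; apply: lee_sum => x _.
case: ifP => [/eqP -> | /negbT hp].
  by rewrite lee_fin sub0r oppr_le0.
case: ifP => [_|/negbT hq]; first by rewrite leey.
rewrite lee_fin.
have pp : 0 < p x by rewrite lt_def hp p0.
have qp : 0 < q x by rewrite lt_def hq q0.
have := @ln_ge _ _ (divr_gt0 pp qp).
rewrite invf_div => h.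
have := ler_wpM2l (ltW pp) h.
by rewrite mulrBr mulr1 mulrCA divff ?mulr1.
Qed.


Lemma psd_diag (R : realType) (I : finType) (A : I -> I -> R[i]) a :
  psd A -> 0 <= A a a.
Proof.
have c0 : conjc (0:R[i]) = 0 by apply/eqP; rewrite eq_complex /= oppr0 !eqxx.
have c1 : conjc (1:R[i]) = 1 by apply/eqP; rewrite eq_complex /= oppr0 !eqxx.
move=> /(_ (fun x => (x == a)%:R)).
rewrite (bigD1 a) //= [X in _ + X]big1 ?addr0 => [|x xa]; last first.
  by rewrite big1 // => y _; rewrite (negbTE xa) c0 !mul0r.
rewrite (bigD1 a) //= [X in _ + X]big1 ?addr0 => [|x xa]; last by rewrite (negbTE xa) mulr0.
by rewrite eqxx c1 mulr1 mul1r.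
Qed.

Lemma tr_proj (R : realType) (A : 'M[R[i]]_2) l : \tr (A *m @Defs.proj R l) = A l l.
Proof.
rewrite /mxtrace (bigD1 l) //= big1 => [|i il]; last first.
  by rewrite mxE big1 // => j _; rewrite mxE (negbTE il) andbF mulr0.
rewrite addr0 mxE (bigD1 l) //= big1 => [|j jl]; last by rewrite mxE (negbTE jl) mulr0.
by rewrite mxE !eqxx mulr1 addr0.
Qed.

Lemma sum_pair12 (V : nmodType) (F : 'I_1 * 'I_2 -> V) :
  \sum_p F p = \sum_j F (ord0, j).
Proof.
transitivity (\sum_p F (p.1, p.2)); first by apply eq_bigr => -[].
by rewrite -(pair_bigA _ (fun i j => F (i, j))) big_ord1.
Qed.

Lemma Phi_psd (R : realType) (Phi : 'M[R[i]]_2 -> 'M[R[i]]_2) rho k :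
  completely_positive Phi -> is_state rho -> 0 <= Phi rho k k.
Proof.
move=> Hcp [Hpsd _].
pose X := fun (p q : 'I_1 * 'I_2) => rho p.2 q.2.
have HX : psd X.
  move=> v; rewrite /X.
  rewrite sum_pair12; under eq_bigr => j _ do rewrite sum_pair12.
  exact: (Hpsd (fun j => v (ord0, j))).
have := @psd_diag _ _ _ (ord0, k) (Hcp 1%N X HX).
rewrite /ampliate /=.
suff -> : (\matrix_(i, j) X (ord0, i) (ord0, j)) = rho by [].
by apply/matrixP => i j; rewrite mxE.
Qed.

Lemma ReC_ge0 (R : realType) (z : R[i]) : 0 <= z -> 0 <= complex.Re z.
Proof. by rewrite lecE => /andP[]. Qed.

Lemma sum_Re_diag (R : realType) (A : 'M[R[i]]_2) :
  \sum_l complex.Re (A l l) = complex.Re (\tr A).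
Proof. by rewrite /mxtrace raddf_sum. Qed.

Definition ud (R : realType) (phi : R) (a : 'I_2) : R[i] :=
  if a == ord0 then expi (- phi) else expi phi.
Arguments ud {R}.

Lemma Uz_conj (R : realType) (phi : R) (B : 'M[R[i]]_2) a b :
  (Uz phi *m B *m Uz (- phi)) a b = ud phi a * B a b * ud (- phi) b.
Proof.
rewrite mxE (bigD1 b) //= [X in _ + X]big1 ?addr0 => [|j jb]; last first.
  by rewrite [Uz _ j b]mxE (negbTE jb) mulr0.
rewrite mxE (bigD1 a) //= [X in _ + X]big1 ?addr0 => [|k ka]; last first.
  by rewrite mxE eq_sym (negbTE ka) mul0r.
by rewrite !mxE !eqxx.
Qed.

Lemma ord2P (a : 'I_2) : a = ord0 \/ a = lift ord0 ord0.
Proof.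
case: a => [[|[|m]] h]; [left|right|by []]; exact: val_inj.
Qed.

Lemma ud_pihalf (R : realType) (x : R[i]) a b :
  ud (pi / 2) a * x * ud (- (pi / 2)) b = if a == b then x else - x.
Proof.
have e1 : expi (- (pi / 2)) = Complex 0 (-1) :> R[i].
  by rewrite /expi cosN sinN cos_pihalf sin_pihalf.
have e2 : expi (pi / 2) = Complex 0 1 :> R[i].
  by rewrite /expi cos_pihalf sin_pihalf.
have m1 : Complex 0 (-1) * Complex 0 1 = 1 :> R[i].
  by apply/eqP; rewrite eq_complex /= !(mul0r, mulr0, mulr1, mul1r, mulN1r, opprK, oppr0, addr0, sub0r, subr0, eqxx).
have m2 : Complex 0 1 * Complex 0 (-1) = 1 :> R[i] by rewrite mulrC.
have m3 : Complex 0 (-1) * Complex 0 (-1) = -1 :> R[i].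
  by apply/eqP; rewrite eq_complex /= !(mul0r, mulr0, mulr1, mul1r, mulN1r, opprK, oppr0, addr0, sub0r, subr0, eqxx).
have m4 : Complex 0 1 * Complex 0 1 = -1 :> R[i].
  by apply/eqP; rewrite eq_complex /= !(mul0r, mulr0, mulr1, mul1r, mulN1r, opprK, oppr0, addr0, sub0r, subr0, eqxx).
rewrite /ud opprK mulrAC.
by case: (ord2P a) => ->; case: (ord2P b) => -> /=; rewrite ?e1 ?e2 ?m1 ?m2 ?m3 ?m4 ?mul1r ?mulN1r.
Qed.

Lemma state_facts (R : realType) (rho : 'M[R[i]]_2) :
  is_state rho -> (forall l, 0 <= complex.Re (rho l l)) /\ \sum_l complex.Re (rho l l) = 1.
Proof.
move=> [Hp Ht]; split => [l|]; first exact/ReC_ge0/(@psd_diag _ _ _ l Hp).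
by rewrite sum_Re_diag Ht.
Qed.

Lemma pcoh_facts (R : realType) (Phi : 'M[R[i]]_2 -> 'M[R[i]]_2) rho :
  completely_positive Phi -> trace_preserving Phi -> is_state rho ->
  (forall lk, 0 <= pcoh Phi rho lk) /\ \sum_lk pcoh Phi rho lk = 1.
Proof.
move=> Hcp Htp Hs; have [h1 h2] := @state_facts _ _ Hs.
have h3 : forall k, 0 <= complex.Re (Phi rho k k) by move=> k; exact/ReC_ge0/(@Phi_psd _ _ _ _ Hcp Hs).
have h4 : \sum_k complex.Re (Phi rho k k) = 1.
  by rewrite sum_Re_diag Htp; case: Hs => _ ->.
split => [[l k]|]; first by rewrite /pcoh !tr_proj mulr_ge0.
rewrite /pcoh.
transitivity (\sum_(p : 'I_2 * 'I_2) complex.Re (rho p.1 p.1) * complex.Re (Phi rho p.2 p.2)).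
  by apply: eq_bigr => -[l k] _; rewrite !tr_proj.
by rewrite -(pair_bigA _ (fun l k => complex.Re (rho l l) * complex.Re (Phi rho k k))) /= -big_distrlr /= h2 h4 mulr1.
Qed.

Theorem theorem1 (R : realType) (Phi : {linear 'M[R[i]]_2 -> 'M[R[i]]_2})
  (Hcp : completely_positive Phi) (Htp : trace_preserving Phi)
  (Hcov : phase_covariant Phi) (rhoi : 'M[R[i]]_2) (Hrho : is_state rhoi) :
  Dc Phi rhoi = 0%E.
Proof.
pose rhoI : 'M[R[i]]_2 := \matrix_(a, b) if a == b then rhoi a b else 0.
have two0 : (2 : R[i]) != 0 by rewrite pnatr_eq0.
have HI : rhoI = 2^-1 *: (rhoi + Uz (pi / 2) *m rhoi *m Uz (- (pi / 2))).
  apply/matrixP => a b; rewrite mxE [in RHS]mxE [in RHS]mxE Uz_conj ud_pihalf.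
  case: ifP => _; last by rewrite subrr mulr0.
  by rewrite -mulr2n -[rhoi a b *+ 2]mulr_natr mulrCA mulVf ?mulr1.
have HPd : forall k, Phi rhoI k k = Phi rhoi k k.
  move=> k; rewrite HI linearZ linearD /= -Hcov // mxE [in X in _ * X]mxE Uz_conj ud_pihalf eqxx.
  by rewrite -mulr2n -[Phi rhoi k k *+ 2]mulr_natr mulrCA mulVf ?mulr1.
have HIs : incoherent rhoI.
  split; last by rewrite !mxE.
  split.
    move=> v; apply: sumr_ge0 => a _.
    rewrite (bigD1 a) //= [X in _ + X]big1 ?addr0 => [|b ba]; last first.
      by rewrite mxE eq_sym (negbTE ba) mulr0 mul0r.
    rewrite mxE eqxx mulrAC; apply: mulr_ge0.
      by rewrite mulrC; exact: mulcJ_ge0.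
    exact: (@psd_diag _ _ _ a (proj1 Hrho)).
  rewrite -(proj2 Hrho) /mxtrace; apply: eq_bigr => a _; by rewrite mxE eqxx.
have Hp : pcoh Phi rhoI = pcoh Phi rhoi.
  apply: funext => -[l k]; by rewrite /pcoh /= !tr_proj HPd mxE eqxx.
apply/eqP; rewrite eq_le; apply/andP; split.
  apply: ge_ereal_inf; exists 0%E => //; exists rhoI => //.
  by rewrite Hp DKL_self.
apply: le_ereal_inf_tmp => y [r Hr <-].
have [a1 a2] := @pcoh_facts _ _ _ Hcp Htp Hrho.
have [b1 b2] := @pcoh_facts _ _ _ Hcp Htp (proj1 Hr).
exact: DKL_ge0.
Qed.
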